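(* Let $y$ be the solution of the problem $\varepsilon^2 y''(x)=f(x,y)$ on $(0,1)$, $y(0)=y(1)=0$, with $f$ and the Shishkin mesh $\{x_i\}_{i=0}^N$ as described in the context, and let $G$ be the discrete operator defined in the context. Assume that $\varepsilon\leqslant C_0/N$ for some constant $C_0>0$. Then there is a constant $C>0$ independent of $N$ and $\varepsilon$ such that $$|(Gy)_{N/4}|\leqslant\frac{C}{N},$$ where $(Gy)_{N/4}$ is the component with index $N/4$ (corresponding to the mesh point $x_{N/4}=\lambda$) of $G$ applied to the vector $(y(x_0),\ldots,y(x_N))^T$.
   Context: Problem: $\varepsilon^2y''(x)=f(x,y)$ on $(0,1)$, $y(0)=y(1)=0$, where $\varepsilon>0$ is a small parameter, $f\in C^k([0,1]\times\mathbb{R})$ for some $k\geq 2$, and $f_y=\partial f/\partial y\geq m>0$ on $[0,1]\times\mathbb{R}$ for a constant $m$; this problem has a unique solution $y$. Shishkin mesh: $N$ is a positive integer divisible by 4, $\lambda=\min\{1/4,\,2\varepsilon\ln N/\sqrt{m}\}$, and it is assumed that $\lambda=2\varepsilon\ln N/\sqrt{m}$. The mesh $0=x_0<x_1<\cdots<x_N=1$ is equidistant on each of $[0,\lambda]$ (with $N/4$ subintervals), $[\lambda,1-\lambda]$ (with $N/2$ subintervals) and $[1-\lambda,1]$ (with $N/4$ subintervals); thus $x_{N/4}=\lambda$, $x_{3N/4}=1-\lambda$, subintervals in $[0,\lambda]\cup[1-\lambda,1]$ have length $4\lambda/N$ and those in $[\lambda,1-\lambda]$ have length $2(1-2\lambda)/N$.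 Scheme: $\gamma$ is a constant with $\gamma\geq f_y$, and $\beta=\sqrt{\gamma}/\varepsilon$. For $i=1,\ldots,N$ let $\ell_i=x_i-x_{i-1}$, $d_i=\beta/\tanh(\beta\ell_i)$, $a_i=\beta/\sinh(\beta\ell_i)$, $\Delta d_i=d_i-a_i$. For $v=(v_0,\ldots,v_N)^T\in\mathbb{R}^{N+1}$ write $f_j=f(x_j,v_j)$ and define $Gv\in\mathbb{R}^{N+1}$ by $(Gv)_0=v_0$, $(Gv)_N=v_N$ and, for $i=1,\ldots,N-1$, $$(Gv)_i=\frac{\gamma}{\Delta d_i+\Delta d_{i+1}}\Big[(3a_i+d_i+\Delta d_{i+1})(v_{i-1}-v_i)-(3a_{i+1}+d_{i+1}+\Delta d_i)(v_i-v_{i+1})-\frac{f_{i-1}+2f_i+f_{i+1}}{\gamma}(\Delta d_i+\Delta d_{i+1})\Big].$$ *)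

(* Defs.v *)
From Stdlib Require Import Reals Lra.
From Coquelicot Require Import Coquelicot.
Open Scope R_scope.

Definition inD (p : R * R) : Prop := 0 <= fst p <= 1.

Definition cont_D (f : R -> R -> R) : Prop :=
  forall x y, 0 <= x <= 1 ->
    filterlim (fun p : R * R => f (fst p) (snd p))
              (within inD (locally (x, y))) (locally (f x y)).

Definition pdx (f : R -> R -> R) (x y l : R) : Prop :=
  filterlim (fun h => (f (x + h) y - f x y) / h)
            (within (fun h => h <> 0 /\ 0 <= x + h <= 1) (locally 0))
            (locally l).

Fixpoint Ck (k : nat) (f : R -> R -> R) : Prop :=
  cont_D f /\
  match k with
  | O => True
  | S k' => exists fx fy : R -> R -> R,
      (forall x y, 0 <= x <= 1 ->
         pdx f x y (fx x y) /\ is_derive (fun v => f x v) y (fy x y)) /\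
      Ck k' fx /\ Ck k' fy
  end.

Definition f_y (f : R -> R -> R) (x v : R) : R := Derive (fun w => f x w) v.

Definition lam (eps m : R) (N : nat) : R := 2 * eps * ln (INR N) / sqrt m.

Definition mesh (eps m : R) (N : nat) (i : nat) : R :=
  let l := lam eps m N in
  if (i <=? N / 4)%nat then INR i * (4 * l / INR N)
  else if (i <=? 3 * N / 4)%nat then
    l + INR (i - N / 4) * (2 * (1 - 2 * l) / INR N)
  else (1 - l) + INR (i - 3 * N / 4) * (4 * l / INR N).

Definition Gop (f : R -> R -> R) (gamma eps : R) (x : nat -> R) (N : nat)
    (v : nat -> R) (i : nat) : R :=
  let beta := sqrt gamma / eps in
  let ell j := x j - x (j - 1)%nat in
  let d j := beta / tanh (beta * ell j) in
  let a j := beta / sinh (beta * ell j) in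
  let Dd j := d j - a j in
  let fv j := f (x j) (v j) in
  if (i =? 0)%nat then v 0%nat
  else if (i =? N)%nat then v N
  else gamma / (Dd i + Dd (S i)) *
       ((3 * a i + d i + Dd (S i)) * (v (i - 1)%nat - v i)
        - (3 * a (S i) + d (S i) + Dd i) * (v i - v (S i))
        - (fv (i - 1)%nat + 2 * fv i + fv (S i)) / gamma * (Dd i + Dd (S i))).

(* Main.v *)
Require Import Defs.
From Stdlib Require Import Reals Lra Lia ClassicalEpsilon.
From Coquelicot Require Import Coquelicot.
Open Scope R_scope.

Lemma cont_D_ed (g : R -> R -> R) x y : cont_D g -> 0 <= x <= 1 ->
  forall e, 0 < e -> exists d, 0 < d /\ forall u v, 0 <= u <= 1 ->
    Rabs (u - x) < d -> Rabs (v - y) < d -> Rabs (g u v - g x y) < e.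
Proof.
  intros Hc Hx e He.
  specialize (Hc x y Hx).
  assert (H := Hc _ (locally_ball (g x y) (mkposreal e He))).
  unfold within in H. simpl in H.
  apply (proj2 (locally_2d_locally (fun u v => inD (u,v) -> ball (g x y) e (g u v)) x y)) in H.
  destruct H as [d Hd]. exists d. split. apply cond_pos.
  intros u v Hu H1 H2. specialize (Hd u v H1 H2 Hu). exact Hd.
Qed.

Lemma pdx_ed g x y l : pdx g x y l ->
  forall e, 0 < e -> exists d, 0 < d /\ forall h, h <> 0 -> 0 <= x + h <= 1 ->
    Rabs h < d -> Rabs ((g (x + h) y - g x y) / h - l) < e.
Proof.
  intros Hp e He.
  assert (H := Hp _ (locally_ball l (mkposreal e He))).
  unfold within in H. destruct H as [d Hd]. exists d. split. apply cond_pos.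
  intros h H0 H1 H2. apply Hd. unfold ball; simpl. unfold AbsRing_ball, abs, minus, plus, opp; simpl.
  rewrite Ropp_0, Rplus_0_r. exact H2. exact (conj H0 H1).
Qed.

Definition PD g gx gy := forall x y, 0 <= x <= 1 ->
  pdx g x y (gx x y) /\ is_derive (fun v => g x v) y (gy x y).

Lemma mvt_v g gx gy x a b : PD g gx gy -> 0 <= x <= 1 ->
  exists c, Rmin a b <= c <= Rmax a b /\ g x b - g x a = gy x c * (b - a).
Proof.
  intros HP Hx.
  destruct (MVT_gen (fun v => g x v) a b (fun v => gy x v)) as [c [Hc E]].
  - intros z _. apply (HP x z Hx).
  - intros z _. apply derivable_continuous_pt. exists (gy x z).
    apply is_derive_Reals. apply (HP x z Hx).
  - exists c. split; auto.
Qed.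

Lemma curve g gx gy u x : PD g gx gy -> cont_D gy -> 0 < x < 1 ->
  continuity_pt u x ->
  forall e, 0 < e -> exists d, 0 < d /\ forall h, h <> 0 -> Rabs h < d ->
   Rabs (g (x+h) (u (x+h)) - g x (u x) - h * gx x (u x) - gy x (u x) * (u (x+h) - u x))
   <= e * (Rabs h + Rabs (u (x+h) - u x)).
Proof.
  intros HP Hc Hx Hu e He.
  assert (Hx' : 0 <= x <= 1) by lra.
  destruct (pdx_ed _ _ _ _ (proj1 (HP x (u x) Hx')) e He) as [d1 [Hd1 P1]].
  destruct (cont_D_ed gy x (u x) Hc Hx' e He) as [d2 [Hd2 P2]].
  destruct (Hu d2 Hd2) as [d3 [Hd3 P3]].
  exists (Rmin (Rmin d1 d2) (Rmin d3 (Rmin x (1 - x)))).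
  split. { repeat apply Rmin_pos; lra. }
  intros h H0 Hh.
  assert (Hm1 := Rmin_l (Rmin d1 d2) (Rmin d3 (Rmin x (1 - x)))).
  assert (Hm2 := Rmin_r (Rmin d1 d2) (Rmin d3 (Rmin x (1 - x)))).
  assert (h1 : Rabs h < d1) by (pose proof (Rmin_l d1 d2); lra).
  assert (h2 : Rabs h < d2) by (pose proof (Rmin_r d1 d2); lra).
  assert (h3 : Rabs h < d3) by (pose proof (Rmin_l d3 (Rmin x (1 - x))); lra).
  assert (h4 : Rabs h < Rmin x (1-x)) by (pose proof (Rmin_r d3 (Rmin x (1 - x))); lra).
  assert (hx : 0 <= x + h <= 1).
  { pose proof (Rmin_l x (1-x)); pose proof (Rmin_r x (1-x));
    pose proof (Rle_abs h); pose proof (Rle_abs (-h)); rewrite Rabs_Ropp in *; lra. }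
  assert (Hux : Rabs (u (x+h) - u x) < d2).
  { destruct (Req_dec h 0) as [->|_]; [lra|].
    apply (P3 (x+h)). split. unfold D_x, no_cond. split; auto. lra.
    simpl. unfold R_dist. replace (x+h-x) with h by ring. auto. }
  destruct (mvt_v g gx gy (x+h) (u x) (u (x+h)) HP hx) as [c [Hc1 Hc2]].
  assert (Hcu : Rabs (c - u x) < d2).
  { unfold Rmin, Rmax in Hc1. destruct (Rle_dec (u x) (u (x+h)));
    apply Rabs_def1; pose proof (Rle_abs (u (x+h) - u x)); pose proof (Rle_abs (-(u (x+h) - u x))); rewrite Rabs_Ropp in *; lra. }
  assert (Q1 := P1 h H0 hx h1).
  assert (Q2 := P2 (x+h) c hx ltac:(replace (x+h-x) with h by ring; lra) Hcu).
  replace (g (x+h) (u (x+h)) - g x (u x) - h * gx x (u x) - gy x (u x) * (u (x+h) - u x))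
    with (h * ((g (x + h) (u x) - g x (u x)) / h - gx x (u x)) + (gy (x+h) c - gy x (u x)) * (u (x+h) - u x))
    by (replace (g (x+h) (u (x+h))) with (g (x+h) (u x) + gy (x+h) c * (u (x+h) - u x)) by lra;
        field; auto).
  eapply Rle_trans. apply Rabs_triang. rewrite !Rabs_mult.
  rewrite Rmult_plus_distr_l.
  apply Rplus_le_compat.
  - rewrite Rmult_comm. apply Rmult_le_compat_r. apply Rabs_pos. lra.
  - apply Rmult_le_compat_r. apply Rabs_pos. lra.
Qed.

Lemma cpt_of_ed F t : (forall e, 0 < e -> exists d, 0 < d /\ forall t', Rabs (t' - t) < d -> Rabs (F t' - F t) < e) -> continuity_pt F t.
Proof.
  intros H e He. destruct (H e He) as [d [Hd P]]. exists d. split. lra.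
  intros t' [_ Ht']. apply P. exact Ht'.
Qed.

Lemma ed_of_cpt F t : continuity_pt F t -> forall e, 0 < e -> exists d, 0 < d /\ forall t', Rabs (t' - t) < d -> Rabs (F t' - F t) < e.
Proof.
  intros H e He. destruct (H e He) as [d [Hd P]]. exists d. split. lra.
  intros t' Ht'. destruct (Req_dec t' t) as [->|Hne].
  - rewrite Rminus_diag_eq; auto. rewrite Rabs_R0; auto.
  - apply (P t'). split. split; auto. exact I. exact Ht'.
Qed.

Definition clamp t := Rmax 0 (Rmin 1 t).

Lemma clamp_in t : 0 <= clamp t <= 1.
Proof. unfold clamp, Rmax, Rmin. repeat destruct Rle_dec; lra. Qed.
Lemma clamp_id t : 0 <= t <= 1 -> clamp t = t.
Proof. intros. unfold clamp, Rmax, Rmin. repeat destruct Rle_dec; lra. Qed.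
Lemma clamp_lip t s : Rabs (clamp t - clamp s) <= Rabs (t - s).
Proof. unfold clamp, Rmax, Rmin. repeat destruct Rle_dec; unfold Rabs; repeat destruct Rcase_abs; lra. Qed.
Lemma clamp_cont t : continuity_pt clamp t.
Proof.
  apply cpt_of_ed. intros e He. exists e. split; auto. intros t' H. 
  eapply Rle_lt_trans. apply clamp_lip. auto.
Qed.

Lemma cont_comp g p q t : cont_D g -> (forall s, 0 <= p s <= 1) ->
  continuity_pt p t -> continuity_pt q t -> continuity_pt (fun s => g (p s) (q s)) t.
Proof.
  intros Hg Hp Cp Cq. apply cpt_of_ed. intros e He.
  destruct (cont_D_ed g (p t) (q t) Hg (Hp t) e He) as [d [Hd P]].
  destruct (ed_of_cpt p t Cp d Hd) as [d1 [Hd1 P1]].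
  destruct (ed_of_cpt q t Cq d Hd) as [d2 [Hd2 P2]].
  exists (Rmin d1 d2). split. apply Rmin_pos; auto.
  intros t' Ht'. apply P. apply Hp.
  apply P1. pose proof (Rmin_l d1 d2); lra.
  apply P2. pose proof (Rmin_r d1 d2); lra.
Qed.

Definition Hf f fx fy m g := PD f fx fy /\ cont_D f /\ cont_D fy /\ 0 < m /\
  forall x v, 0 <= x <= 1 -> m <= fy x v <= g.

Lemma slope f fx fy m g x a b : Hf f fx fy m g -> 0 <= x <= 1 -> a <= b ->
  m * (b - a) <= f x b - f x a <= g * (b - a).
Proof.
  intros [HP [_ [_ [Hm Hb]]]] Hx Hab.
  destruct (mvt_v f fx fy x a b HP Hx) as [c [_ E]]. rewrite E.
  destruct (Hb x c Hx). split; apply Rmult_le_compat_r; lra.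
Qed.

Lemma slope_abs f fx fy m g x a b : Hf f fx fy m g -> 0 <= x <= 1 ->
  m * Rabs (b - a) <= Rabs (f x b - f x a) <= g * Rabs (b - a).
Proof.
  intros H Hx. destruct (Rle_dec a b).
  - destruct (slope f fx fy m g x a b H Hx r). rewrite !Rabs_right; try lra.
    destruct H as [_ [_ [_ [Hm _]]]]. nra.
  - destruct (slope f fx fy m g x b a H Hx ltac:(lra)).
    rewrite <- (Rabs_Ropp (b - a)), <- (Rabs_Ropp (f x b - f x a)).
    rewrite !Rabs_right; try lra.
    destruct H as [_ [_ [_ [Hm _]]]]. nra.
Qed.

Definition u0 (f : R -> R -> R) t := epsilon (inhabits 0) (fun v => f (clamp t) v = 0).

Lemma root_ex f fx fy m g x : Hf f fx fy m g -> 0 <= x <= 1 -> exists v, f x v = 0.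
Proof.
  intros H Hx. set (B := Rabs (f x 0) / m).
  assert (Hm : 0 < m) by apply H.
  assert (HB : 0 <= B) by (unfold B; apply Rmult_le_pos; [apply Rabs_pos | left; apply Rinv_0_lt_compat; auto]).
  assert (E : m * B = Rabs (f x 0)) by (unfold B; field; lra).
  destruct (slope f fx fy m g x 0 B H Hx HB) as [S1 _].
  destruct (slope f fx fy m g x (-B) 0 H Hx ltac:(lra)) as [S2 _].
  assert (C : continuity (fun v => f x v)).
  { intro z. apply derivable_continuous_pt. exists (fy x z).
    apply is_derive_Reals. apply (proj1 H x z Hx). }
  destruct (IVT_gen (fun v => f x v) (-B) B 0 C) as [v [_ Hv]].
  - pose proof (Rle_abs (f x 0)); pose proof (Rle_abs (-f x 0)); rewrite Rabs_Ropp in *.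
    unfold Rmin, Rmax; destruct Rle_dec; lra.
  - exists v; auto.
Qed.

Lemma u0_spec f fx fy m g t : Hf f fx fy m g -> f (clamp t) (u0 f t) = 0.
Proof.
  intros H. unfold u0. apply epsilon_spec. apply (root_ex f fx fy m g); auto. apply clamp_in.
Qed.

Lemma u0_bound f fx fy m g x v : Hf f fx fy m g -> 0 <= x <= 1 ->
  Rabs (v - u0 f x) <= Rabs (f x v) / m.
Proof.
  intros H Hx. assert (Hm : 0 < m) by apply H.
  assert (E := u0_spec f fx fy m g x H). rewrite clamp_id in E; auto.
  destruct (slope_abs f fx fy m g x (u0 f x) v H Hx) as [S _].
  rewrite E, Rminus_0_r in S. apply Rmult_le_reg_l with m; auto.
  replace (m * (Rabs (f x v) / m)) with (Rabs (f x v)) by (field; lra). lra.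
Qed.

Lemma u0_clamp f t : u0 f (clamp t) = u0 f t.
Proof. unfold u0. rewrite (clamp_id (clamp t)); auto. apply clamp_in. Qed.

Lemma u0_cont f fx fy m g t : Hf f fx fy m g -> continuity_pt (u0 f) t.
Proof.
  intros H. assert (Hm : 0 < m) by apply H.
  apply cpt_of_ed. intros e He.
  destruct (cont_D_ed f (clamp t) (u0 f t) (proj1 (proj2 H)) (clamp_in t) (e * m)) as [d [Hd P]].
  { apply Rmult_lt_0_compat; auto. }
  exists d. split; auto. intros t' Ht'.
  rewrite <- (u0_clamp f t'), <- (u0_clamp f t).
  assert (B := u0_bound f fx fy m g (clamp t') (u0 f t) H (clamp_in _)).
  rewrite Rabs_minus_sym. rewrite u0_clamp. eapply Rle_lt_trans. apply B.
  assert (E := u0_spec f fx fy m g t H).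
  rewrite <- (Rminus_0_r (f (clamp t') (u0 f t))). rewrite <- E.
  apply Rmult_lt_reg_r with m; auto. unfold Rdiv. rewrite Rmult_assoc, Rinv_l, Rmult_1_r; try lra.
  apply P. apply clamp_in. eapply Rle_lt_trans. apply clamp_lip. auto.
  rewrite Rminus_diag_eq; auto. rewrite Rabs_R0. auto.
Qed.

Lemma alg_implicit a b m h D e : 0 < m -> m <= b -> 0 < e -> e <= m / 2 -> e <= 1 -> h <> 0 ->
  Rabs (h * a + b * D) <= e * (Rabs h + Rabs D) ->
  Rabs (D / h + a / b) <= e * (1 + 2 * (Rabs a + 1) / m) / m.
Proof.
  intros Hm Hb He He2 He1 Hh H.
  assert (Hh' : 0 < Rabs h) by (apply Rabs_pos_lt; auto).
  assert (HD : m / 2 * Rabs D <= (Rabs a + 1) * Rabs h).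
  { assert (T : Rabs (b * D) <= Rabs (h * a + b * D) + Rabs (h * a)).
    { replace (b * D) with ((h * a + b * D) + - (h * a)) at 1 by ring.
      eapply Rle_trans. apply Rabs_triang. rewrite Rabs_Ropp. lra. }
    rewrite Rabs_mult in T. rewrite Rabs_mult in T. rewrite (Rabs_right b) in T by lra.
    assert (m * Rabs D <= b * Rabs D) by (apply Rmult_le_compat_r; [apply Rabs_pos | lra]).
    assert (e * Rabs D <= m/2 * Rabs D) by (apply Rmult_le_compat_r; [apply Rabs_pos | lra]).
    assert (e * Rabs h <= 1 * Rabs h) by (apply Rmult_le_compat_r; [apply Rabs_pos | lra]).
    rewrite Rmult_comm in T. lra. }
  replace (D / h + a / b) with ((h * a + b * D) / (b * h)) by (field; split; lra).
  assert (Hbh : b * h <> 0) by (intro Z; apply Rmult_integral in Z; destruct Z; lra).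
  unfold Rdiv at 1. rewrite Rabs_mult, (Rabs_inv (b * h)), Rabs_mult, (Rabs_right b) by lra.
  assert (HD2 : Rabs D <= 2 * (Rabs a + 1) / m * Rabs h).
  { apply Rmult_le_reg_l with (m/2). lra.
    replace (m / 2 * (2 * (Rabs a + 1) / m * Rabs h)) with ((Rabs a + 1) * Rabs h) by (field; lra). lra. }
  apply Rle_trans with (e * (Rabs h + Rabs D) * / (m * Rabs h)).
  - apply Rmult_le_compat; try lra. apply Rabs_pos.
    left. apply Rinv_0_lt_compat. apply Rmult_lt_0_compat; lra.
    apply Rinv_le_contravar. apply Rmult_lt_0_compat; lra. apply Rmult_le_compat_r; lra.
  - apply Rmult_le_reg_r with (m * Rabs h). apply Rmult_lt_0_compat; lra.
    rewrite Rmult_assoc, Rinv_l, Rmult_1_r by (apply Rgt_not_eq; apply Rmult_lt_0_compat; lra).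
    replace (e * (1 + 2 * (Rabs a + 1) / m) / m * (m * Rabs h)) with (e * (Rabs h + 2 * (Rabs a + 1) / m * Rabs h)) by (field; lra).
    apply Rmult_le_compat_l; lra.
Qed.

Lemma u0_deriv f fx fy m g x : Hf f fx fy m g -> 0 < x < 1 ->
  derivable_pt_lim (u0 f) x (- fx x (u0 f x) / fy x (u0 f x)).
Proof.
  intros H Hx eps Heps.
  assert (Hm : 0 < m) by apply H.
  pose proof H as H'. destruct H' as [HP [Hc [Hcy [_ Hb]]]].
  set (a := fx x (u0 f x)). set (b := fy x (u0 f x)).
  assert (Hbb : m <= b <= g) by (apply Hb; lra).
  set (K := (1 + 2 * (Rabs a + 1) / m)).
  assert (HK : 0 < K). { unfold K. assert (0 <= 2 * (Rabs a + 1) / m). { apply Rmult_le_pos. pose proof (Rabs_pos a); lra. left; apply Rinv_0_lt_compat; lra. } lra. }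
  set (e := Rmin (m/2) (Rmin 1 (eps * m / (2 * K)))).
  assert (He : 0 < e). { unfold e. repeat apply Rmin_pos; try lra. apply Rmult_lt_0_compat. nra. apply Rinv_0_lt_compat. lra. }
  destruct (curve f fx fy (u0 f) x HP Hcy Hx (u0_cont f fx fy m g x H) e He) as [d [Hd P]].
  exists (mkposreal _ (Rmin_pos d (Rmin x (1-x)) Hd ltac:(apply Rmin_pos; lra))).
  intros h Hh0 Hhd. simpl in Hhd.
  assert (Hhx : 0 <= x + h <= 1).
  { pose proof (Rmin_r d (Rmin x (1 - x))); pose proof (Rmin_l x (1-x)); pose proof (Rmin_r x (1-x));
    pose proof (Rle_abs h); pose proof (Rle_abs (-h)); rewrite Rabs_Ropp in *; lra. }
  assert (Q := P h Hh0 ltac:(pose proof (Rmin_l d (Rmin x (1 - x))); lra)).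
  assert (E1 := u0_spec f fx fy m g (x+h) H). rewrite clamp_id in E1 by auto.
  assert (E2 := u0_spec f fx fy m g x H). rewrite clamp_id in E2 by lra.
  rewrite E1, E2 in Q. fold a b in Q.
  replace (0 - 0 - h * a - b * (u0 f (x + h) - u0 f x)) with (- (h * a + b * (u0 f (x + h) - u0 f x))) in Q by ring.
  rewrite Rabs_Ropp in Q.
  assert (R := alg_implicit a b m h (u0 f (x + h) - u0 f x) e Hm (proj1 Hbb) He
     ltac:(unfold e; apply Rmin_l) ltac:(unfold e; pose proof (Rmin_r (m/2) (Rmin 1 (eps * m / (2 * K)))); pose proof (Rmin_l 1 (eps * m / (2 * K))); lra) Hh0 Q).
  fold K in R.
  replace (- a / b) with (- (a / b)) by (field; lra).
  unfold Rminus. rewrite Ropp_involutive. eapply Rle_lt_trans. apply R.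
  assert (e <= eps * m / (2 * K)) by (unfold e; pose proof (Rmin_r (m/2) (Rmin 1 (eps * m / (2 * K)))); pose proof (Rmin_r 1 (eps * m / (2 * K))); lra).
  apply Rle_lt_trans with (eps * m / (2 * K) * K / m).
  - unfold Rdiv. apply Rmult_le_compat_r. left; apply Rinv_0_lt_compat; lra.
    apply Rmult_le_compat_r; lra.
  - replace (eps * m / (2 * K) * K / m) with (eps / 2) by (field; lra). lra.
Qed.

Lemma chain g gx gy u x u' : PD g gx gy -> cont_D gy -> 0 < x < 1 ->
  derivable_pt_lim u x u' ->
  derivable_pt_lim (fun t => g t (u t)) x (gx x (u x) + gy x (u x) * u').
Proof.
  intros HP Hc Hx Hu eps Heps.
  assert (Cu : continuity_pt u x) by (apply derivable_continuous_pt; exists u'; auto).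
  set (b := gy x (u x)).
  set (K := 2 + Rabs u' + Rabs b).
  assert (HK : 0 < K) by (unfold K; pose proof (Rabs_pos u'); pose proof (Rabs_pos b); lra).
  set (e := Rmin 1 (eps / (2 * K))).
  assert (He : 0 < e) by (unfold e; apply Rmin_pos; [lra | apply Rdiv_lt_0_compat; lra]).
  assert (He1 : e <= 1) by apply Rmin_l.
  assert (He2 : e <= eps / (2 * K)) by apply Rmin_r.
  destruct (curve g gx gy u x HP Hc Hx Cu e He) as [d [Hd P]].
  destruct (Hu e He) as [d2 Hd2].
  exists (mkposreal _ (Rmin_pos d d2 Hd (cond_pos d2))).
  intros h Hh0 Hhd. simpl in Hhd.
  assert (Q := P h Hh0 ltac:(pose proof (Rmin_l d d2); lra)).
  assert (Q2 := Hd2 h Hh0 ltac:(pose proof (Rmin_r d d2); lra)).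
  set (D := u (x+h) - u x) in *. fold b in Q.
  assert (Hh' : 0 < Rabs h) by (apply Rabs_pos_lt; auto).
  assert (HD : Rabs D <= (Rabs u' + 1) * Rabs h).
  { replace D with (((D / h) - u') * h + u' * h) by (field; auto).
    eapply Rle_trans. apply Rabs_triang. rewrite !Rabs_mult.
    replace (u (x + h) - u x) with D in Q2 by reflexivity.
    nra. }
  replace ((g (x + h) (u (x + h)) - g x (u x)) / h - (gx x (u x) + b * u'))
    with ((g (x + h) (u (x + h)) - g x (u x) - h * gx x (u x) - b * D) / h + b * (D / h - u'))
    by (field; auto).
  eapply Rle_lt_trans. apply Rabs_triang.
  unfold Rdiv at 1. rewrite !Rabs_mult, Rabs_Rinv by auto.
  apply Rle_lt_trans with (e * (1 + (Rabs u' + 1)) + Rabs b * e).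
  - apply Rplus_le_compat.
    + apply Rmult_le_reg_r with (Rabs h); auto.
      rewrite Rmult_assoc, Rinv_l, Rmult_1_r by lra.
      eapply Rle_trans. apply Q. nra.
    + apply Rmult_le_compat_l. apply Rabs_pos. left.
      replace (u (x + h) - u x) with D in Q2 by reflexivity. auto.
  - apply Rle_lt_trans with (e * K). unfold K. nra.
    apply Rle_lt_trans with (eps / (2 * K) * K). apply Rmult_le_compat_r; lra.
    replace (eps / (2 * K) * K) with (eps / 2) by (field; lra). lra.
Qed.

Lemma Ck_down k : forall f, Ck (S k) f -> Ck k f.
Proof.
  induction k as [|k IH]; intros f H.
  - simpl. split; [apply H | exact I].
  - destruct H as [Hc [fx [fy [Hp [H1 H2]]]]].
    split; auto. exists fx, fy. split; auto.
Qed.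

Lemma Ck_ge2 k f : (2 <= k)%nat -> Ck k f -> Ck 2 f.
Proof.
  intros Hk. induction Hk; auto.
  intros H. apply IHHk. apply Ck_down. auto.
Qed.

Lemma Ck2_struct f : Ck 2 f -> exists fx fy fxx fxy fyx fyy,
  cont_D f /\ cont_D fx /\ cont_D fy /\ cont_D fxx /\ cont_D fxy /\ cont_D fyx /\ cont_D fyy /\
  PD f fx fy /\ PD fx fxx fxy /\ PD fy fyx fyy.
Proof.
  intros [Hc [fx [fy [Hp [[Hcx [fxx [fxy [Hpx [[Hcxx _] [Hcxy _]]]]]] [Hcy [fyx [fyy [Hpy [[Hcyx _] [Hcyy _]]]]]]]]]]].
  exists fx, fy, fxx, fxy, fyx, fyy.
  exact (conj Hc (conj Hcx (conj Hcy (conj Hcxx (conj Hcxy (conj Hcyx (conj Hcyy (conj Hp (conj Hpx Hpy))))))))).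
Qed.

Lemma bnd_comp f fx fy m g h : Hf f fx fy m g -> cont_D h ->
  exists B, 0 <= B /\ forall x, 0 <= x <= 1 -> Rabs (h x (u0 f x)) <= B.
Proof.
  intros H Hh.
  set (F := fun t => Rabs (h (clamp t) (u0 f t))).
  assert (CF : forall t, continuity_pt F t).
  { intro t. unfold F.
    apply (continuity_pt_comp (fun s => h (clamp s) (u0 f s)) Rabs).
    apply cont_comp; auto. apply clamp_in. apply clamp_cont. apply (u0_cont f fx fy m g t H).
    apply Rcontinuity_abs. }
  destruct (continuity_ab_maj F 0 1 ltac:(lra) (fun c _ => CF c)) as [Mx [HM _]].
  exists (F Mx). split. unfold F; apply Rabs_pos.
  intros x Hx. specialize (HM x Hx). unfold F in HM. rewrite clamp_id in HM; auto.
Qed.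

Definition U1 f fx fy x := - fx x (u0 f x) / fy x (u0 f x).
Definition DFx f fx fy fxx fxy x := fxx x (u0 f x) + fxy x (u0 f x) * U1 f fx fy x.
Definition DFy f fx fy fyx fyy x := fyx x (u0 f x) + fyy x (u0 f x) * U1 f fx fy x.
Definition U2 f fx fy fxx fxy fyx fyy x :=
  ((- DFx f fx fy fxx fxy x) * fy x (u0 f x) - (- fx x (u0 f x)) * DFy f fx fy fyx fyy x) / (fy x (u0 f x)) ^ 2.

Lemma U1_deriv f fx fy m g x : Hf f fx fy m g -> 0 < x < 1 -> is_derive (u0 f) x (U1 f fx fy x).
Proof. intros H Hx. apply is_derive_Reals. apply (u0_deriv f fx fy m g x H Hx). Qed.

Lemma U2_deriv f fx fy fxx fxy fyx fyy m g x : Hf f fx fy m g ->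
  PD fx fxx fxy -> cont_D fxy -> PD fy fyx fyy -> cont_D fyy -> 0 < x < 1 ->
  is_derive (U1 f fx fy) x (U2 f fx fy fxx fxy fyx fyy x).
Proof.
  intros H Px Cx Py Cy Hx. unfold U1, U2.
  assert (Hm : 0 < m) by apply H.
  assert (Hfy : fy x (u0 f x) <> 0).
  { destruct H as [_ [_ [_ [_ Hb]]]]. specialize (Hb x (u0 f x) ltac:(lra)). lra. }
  assert (H1 : is_derive (fun t => - fx t (u0 f t)) x (- DFx f fx fy fxx fxy x)).
  { apply (is_derive_opp (fun t => fx t (u0 f t))). apply is_derive_Reals.
    apply chain; auto. apply (u0_deriv f fx fy m g x H Hx). }
  assert (H2 : is_derive (fun t => fy t (u0 f t)) x (DFy f fx fy fyx fyy x)).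
  { apply is_derive_Reals. apply chain; auto. apply (u0_deriv f fx fy m g x H Hx). }
  exact (is_derive_div _ _ x _ _ H1 H2 Hfy).
Qed.

Lemma U_bounds f fx fy fxx fxy fyx fyy m g : Hf f fx fy m g ->
  cont_D fx -> cont_D fxx -> cont_D fxy -> cont_D fyx -> cont_D fyy ->
  exists L P, 0 <= L /\ 0 <= P /\ forall x, 0 <= x <= 1 ->
    Rabs (U1 f fx fy x) <= L /\ Rabs (U2 f fx fy fxx fxy fyx fyy x) <= P.
Proof.
  intros H C1 C2 C3 C4 C5.
  assert (Hm : 0 < m) by apply H.
  destruct (bnd_comp f fx fy m g fx H C1) as [Bx [Hx0 Bx1]].
  destruct (bnd_comp f fx fy m g fxx H C2) as [Bxx [Hxx0 Bxx1]].
  destruct (bnd_comp f fx fy m g fxy H C3) as [Bxy [Hxy0 Bxy1]].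
  destruct (bnd_comp f fx fy m g fyx H C4) as [Byx [Hyx0 Byx1]].
  destruct (bnd_comp f fx fy m g fyy H C5) as [Byy [Hyy0 Byy1]].
  set (L := Bx / m).
  assert (HL : 0 <= L) by (unfold L; apply Rmult_le_pos; [lra | left; apply Rinv_0_lt_compat; lra]).
  exists L, (((Bxx + Bxy * L) * g + Bx * (Byx + Byy * L)) / (m * m)).
  destruct H as [_ [_ [_ [_ Hb]]]].
  assert (Hg : m <= g) by (destruct (Hb 0 0 ltac:(lra)); lra).
  split; auto. split.
  { apply Rmult_le_pos. 2:{ left; apply Rinv_0_lt_compat; nra. }
    apply Rplus_le_le_0_compat; apply Rmult_le_pos; try nra. }
  intros x Hx.
  set (a := fx x (u0 f x)). set (b := fy x (u0 f x)).
  assert (Hbb : m <= b <= g) by (apply Hb; auto).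
  assert (HU1 : Rabs (U1 f fx fy x) <= L).
  { unfold U1. fold a b. unfold Rdiv. rewrite Rabs_mult, Rabs_Ropp, Rabs_inv, (Rabs_right b) by lra.
    unfold L. apply Rmult_le_compat. apply Rabs_pos. left; apply Rinv_0_lt_compat; lra.
    apply Bx1; auto. apply Rinv_le_contravar; lra. }
  split; auto.
  assert (HDx : Rabs (DFx f fx fy fxx fxy x) <= Bxx + Bxy * L).
  { unfold DFx. eapply Rle_trans. apply Rabs_triang. rewrite Rabs_mult.
    apply Rplus_le_compat. apply Bxx1; auto. apply Rmult_le_compat; try apply Rabs_pos; auto. }
  assert (HDy : Rabs (DFy f fx fy fyx fyy x) <= Byx + Byy * L).
  { unfold DFy. eapply Rle_trans. apply Rabs_triang. rewrite Rabs_mult.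
    apply Rplus_le_compat. apply Byx1; auto. apply Rmult_le_compat; try apply Rabs_pos; auto. }
  unfold U2. fold a b.
  unfold Rdiv. rewrite Rabs_mult, Rabs_inv, (Rabs_right (b^2)) by nra.
  apply Rmult_le_compat. apply Rabs_pos. left; apply Rinv_0_lt_compat; nra.
  - unfold Rminus. eapply Rle_trans. apply Rabs_triang. rewrite Rabs_Ropp, !Rabs_mult, !Rabs_Ropp.
    apply Rplus_le_compat. rewrite (Rabs_right b) by lra.
    apply Rmult_le_compat; try apply Rabs_pos; lra.
    apply Rmult_le_compat; try apply Rabs_pos; auto. apply Bx1; auto.
  - apply Rinv_le_contravar. nra. simpl. nra.
Qed.

Lemma MP (P P1 P2 : R -> R) :
  (forall t, continuity_pt (fun t => P (clamp t)) t) -> P 0 <= 0 -> P 1 <= 0 ->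
  (forall x, 0 < x < 1 -> is_derive P x (P1 x) /\ is_derive P1 x (P2 x)) ->
  (forall x, 0 < x < 1 -> 0 < P x -> 0 < P2 x) ->
  forall x, 0 <= x <= 1 -> P x <= 0.
Proof.
  intros HC H0 H1 HD HS x Hx.
  destruct (continuity_ab_maj (fun t => P (clamp t)) 0 1 ltac:(lra) (fun c _ => HC c)) as [M [HM HMi]].
  rewrite clamp_id in HM by auto.
  assert (HM' : forall c, 0 <= c <= 1 -> P c <= P M).
  { intros c Hc. specialize (HM c Hc). rewrite clamp_id in HM; auto. }
  destruct (Rle_dec (P x) 0) as [|Hpos]; auto. exfalso.
  assert (HPM : 0 < P M) by (specialize (HM' x Hx); lra).
  assert (HMo : 0 < M < 1).
  { split; destruct (Req_dec M 0); destruct (Req_dec M 1); subst; try lra. }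
  assert (H2 := HS M HMo HPM).
  destruct (HD M HMo) as [_ D1]. apply is_derive_Reals in D1.
  destruct (D1 (P2 M) H2) as [d Hd].
  set (t := Rmin d (Rmin M (1 - M)) / 2).
  assert (Ht : 0 < t). { unfold t. assert (0 < Rmin d (Rmin M (1-M))) by (repeat apply Rmin_pos; try lra; apply cond_pos). lra. }
  assert (Htd : t < d). { unfold t. pose proof (Rmin_l d (Rmin M (1-M))). pose proof (cond_pos d). lra. }
  assert (HtM : t < M /\ t < 1 - M).
  { unfold t. pose proof (Rmin_r d (Rmin M (1-M))). pose proof (Rmin_l M (1-M)). pose proof (Rmin_r M (1-M)).
    assert (0 < Rmin d (Rmin M (1-M))) by (repeat apply Rmin_pos; try lra; apply cond_pos). lra. }
  assert (Q : forall h, h <> 0 -> Rabs h < d -> 0 < (P1 (M + h) - P1 M) / h).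
  { intros h Hh Hhd. specialize (Hd h Hh Hhd).
    pose proof (Rle_abs (-((P1 (M + h) - P1 M) / h - P2 M))). rewrite Rabs_Ropp in H. lra. }
  assert (DP : forall c, 0 < c < 1 -> derivable_pt_lim P c (P1 c)).
  { intros c Hc. apply is_derive_Reals. apply (HD c Hc). }
  destruct (Rle_dec 0 (P1 M)) as [Hp|Hn].
  - destruct (MVT_cor2 P P1 M (M + t) ltac:(lra)) as [c [Ec Hc]].
    { intros c Hc. apply DP. lra. }
    assert (Qc := Q (c - M) ltac:(lra) ltac:(rewrite Rabs_right; lra)).
    replace (M + (c - M)) with c in Qc by ring.
    assert (0 < P1 c - P1 M).
    { replace (P1 c - P1 M) with ((P1 c - P1 M) / (c - M) * (c - M)) by (field; lra).
      apply Rmult_lt_0_compat; lra. }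
    assert (P (M + t) <= P M) by (apply HM'; lra).
    assert (0 < P1 c * (M + t - M)) by (apply Rmult_lt_0_compat; lra). lra.
  - destruct (MVT_cor2 P P1 (M - t) M ltac:(lra)) as [c [Ec Hc]].
    { intros c Hc. apply DP. lra. }
    assert (Qc := Q (c - M) ltac:(lra) ltac:(rewrite Rabs_left; lra)).
    replace (M + (c - M)) with c in Qc by ring.
    assert (P1 c - P1 M < 0).
    { replace (P1 c - P1 M) with (- ((P1 c - P1 M) / (c - M) * (M - c))) by (field; lra).
      assert (0 < (P1 c - P1 M) / (c - M) * (M - c)) by (apply Rmult_lt_0_compat; lra). lra. }
    assert (P (M - t) <= P M) by (apply HM'; lra).
    assert (P1 c * (M - (M - t)) < 0) by (replace (M - (M - t)) with t by ring; apply Rmult_neg_pos; lra).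
    lra.
Qed.

Lemma y_clamp_cont (y : R -> R) :
  (forall x, 0 <= x <= 1 ->
    filterlim y (within (fun t => 0 <= t <= 1) (locally x)) (locally (y x))) ->
  forall t, continuity_pt (fun s => y (clamp s)) t.
Proof.
  intros Hy t. apply cpt_of_ed. intros e He.
  assert (H := Hy (clamp t) (clamp_in t) _ (locally_ball (y (clamp t)) (mkposreal e He))).
  unfold within in H. destruct H as [d Hd].
  exists d. split. apply cond_pos. intros t' Ht'.
  apply (Hd (clamp t')). 2: apply clamp_in.
  unfold ball; simpl. unfold AbsRing_ball, abs, minus, plus, opp; simpl.
  eapply Rle_lt_trans. apply clamp_lip. auto.
Qed.

Definition psi A K s x := A + K * (exp (- s * x) + exp (- s * (1 - x))).

Lemma psi_d A K s x : is_derive (psi A K s) x (K * (- s * exp (- s * x) + s * exp (- s * (1 - x)))).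
Proof. unfold psi. auto_derive; auto. unfold Rminus. ring. Qed.

Lemma psi_dd K s x : is_derive (fun x => K * (- s * exp (- s * x) + s * exp (- s * (1 - x)))) x
   (K * (s * s) * (exp (- s * x) + exp (- s * (1 - x)))).
Proof. auto_derive; auto. unfold Rminus. ring. Qed.

Lemma psi_cont A K s t : continuity_pt (fun x => psi A K s (clamp x)) t.
Proof.
  apply (continuity_pt_comp clamp (psi A K s)). apply clamp_cont.
  apply derivable_continuous_pt. eexists. apply is_derive_Reals. apply psi_d.
Qed.

Lemma barrier f fx fy m g (V1 V2 : R -> R) P eps (y y1 y2 : R -> R) :
  Hf f fx fy m g ->
  (forall x, 0 < x < 1 -> is_derive (u0 f) x (V1 x) /\ is_derive V1 x (V2 x)) ->
  0 <= P -> (forall x, 0 < x < 1 -> Rabs (V2 x) <= P) -> 0 < eps ->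
  (forall x, 0 <= x <= 1 ->
    filterlim y (within (fun t => 0 <= t <= 1) (locally x)) (locally (y x))) ->
  (forall x, 0 < x < 1 -> is_derive y x (y1 x) /\ is_derive y1 x (y2 x) /\ eps ^ 2 * y2 x = f x (y x)) ->
  y 0 = 0 -> y 1 = 0 ->
  forall x, 0 <= x <= 1 ->
   Rabs (y x - u0 f x) <= psi (eps^2 * P / m) (Rabs (u0 f 0) + Rabs (u0 f 1)) (sqrt m / eps) x.
Proof.
  intros H HV HP HP2 Heps Hy Hd Hy0 Hy1.
  assert (Hm : 0 < m) by apply H.
  set (A := eps^2 * P / m). set (K := Rabs (u0 f 0) + Rabs (u0 f 1)). set (s := sqrt m / eps).
  assert (HA : 0 <= A) by (unfold A; apply Rmult_le_pos; [nra | left; apply Rinv_0_lt_compat; lra]).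
  assert (HK : 0 <= K) by (unfold K; pose proof (Rabs_pos (u0 f 0)); pose proof (Rabs_pos (u0 f 1)); lra).
  assert (Hs2 : eps^2 * (s * s) = m).
  { unfold s. replace (eps ^ 2 * (sqrt m / eps * (sqrt m / eps))) with (sqrt m * sqrt m) by (field; lra).
    apply sqrt_sqrt; lra. }
  assert (HE : forall x, 0 < exp (- s * x) + exp (- s * (1 - x))).
  { intro x. pose proof (exp_pos (- s * x)); pose proof (exp_pos (- s * (1 - x))); lra. }
  assert (Hpsi0 : K <= psi A K s 0).
  { unfold psi. assert (1 <= exp (- s * 0) + exp (- s * (1 - 0))).
    { rewrite Rmult_0_r, exp_0. pose proof (exp_pos (- s * (1 - 0))); lra. } nra. }
  assert (Hpsi1 : K <= psi A K s 1).
  { unfold psi. assert (1 <= exp (- s * 1) + exp (- s * (1 - 1))).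
    { rewrite Rminus_diag_eq, Rmult_0_r, exp_0 by auto. pose proof (exp_pos (- s * 1)); lra. } nra. }
  assert (Hf0 : forall x, 0 <= x <= 1 -> f x (u0 f x) = 0).
  { intros x Hx. pose proof (u0_spec f fx fy m g x H). rewrite clamp_id in H0; auto. }
  assert (Cw : forall sg t, continuity_pt (fun x => sg * (y (clamp x) - u0 f (clamp x)) - psi A K s (clamp x)) t).
  { intros sg t. apply continuity_pt_minus. apply continuity_pt_mult. apply continuity_pt_const. intros a b; auto.
    apply continuity_pt_minus. apply y_clamp_cont; auto.
    apply (continuity_pt_comp clamp (u0 f)). apply clamp_cont. apply (u0_cont f fx fy m g _ H).
    apply psi_cont. }
  assert (Gen : forall sg, (sg = 1 \/ sg = -1) -> forall x, 0 <= x <= 1 -> sg * (y x - u0 f x) - psi A K s x <= 0).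
  { intros sg Hsg.
    apply (MP _ (fun x => sg * (y1 x - V1 x) - K * (- s * exp (- s * x) + s * exp (- s * (1 - x))))
               (fun x => sg * (y2 x - V2 x) - K * (s * s) * (exp (- s * x) + exp (- s * (1 - x))))).
    - intro t. generalize (Cw sg t). apply continuity_pt_ext. intro z.
      simpl. rewrite (u0_clamp f z). reflexivity.
    - rewrite Hy0. pose proof (Rle_abs (u0 f 0)); pose proof (Rle_abs (- u0 f 0)); rewrite Rabs_Ropp in *.
      pose proof (Rabs_pos (u0 f 1)).
      assert (Rabs (u0 f 0) <= K) by (unfold K; lra). destruct Hsg; subst sg; lra.
    - rewrite Hy1. pose proof (Rle_abs (u0 f 1)); pose proof (Rle_abs (- u0 f 1)); rewrite Rabs_Ropp in *.
      pose proof (Rabs_pos (u0 f 0)).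
      assert (Rabs (u0 f 1) <= K) by (unfold K; lra). destruct Hsg; subst sg; lra.
    - intros x Hx. destruct (Hd x Hx) as [D1 [D2 _]]. destruct (HV x Hx) as [V1d V2d]. split.
      + apply (is_derive_minus (fun x => sg * (y x - u0 f x)) (psi A K s)). 2: apply psi_d.
        apply (is_derive_scal (fun x => y x - u0 f x)). apply (is_derive_minus y (u0 f)); auto.
      + apply (is_derive_minus (fun x => sg * (y1 x - V1 x))). 2: apply psi_dd.
        apply (is_derive_scal (fun x => y1 x - V1 x)). apply (is_derive_minus y1 V1); auto.
    - intros x Hx Hpos. destruct (Hd x Hx) as [_ [_ Eq]].
      assert (Hx' : 0 <= x <= 1) by lra.
      assert (HV2 := HP2 x Hx).
      pose proof (Rle_abs (V2 x)); pose proof (Rle_abs (- V2 x)); rewrite Rabs_Ropp in *.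
      assert (Key : m * (sg * (y x - u0 f x)) <= sg * f x (y x)).
      { destruct Hsg; subst sg.
        - assert (u0 f x <= y x).
          { unfold psi in Hpos. pose proof (HE x). nra. }
          destruct (slope f fx fy m g x (u0 f x) (y x) H Hx' H2). rewrite Hf0 in *; auto. lra.
        - assert (y x <= u0 f x).
          { unfold psi in Hpos. pose proof (HE x). nra. }
          destruct (slope f fx fy m g x (y x) (u0 f x) H Hx' H2). rewrite Hf0 in *; auto. lra. }
      unfold psi in Hpos.
      apply Rmult_lt_reg_l with (eps ^ 2). nra. rewrite Rmult_0_r.
      replace (eps ^ 2 * (sg * (y2 x - V2 x) - K * (s * s) * (exp (- s * x) + exp (- s * (1 - x)))))
        with (sg * (eps ^ 2 * y2 x) - sg * eps ^ 2 * V2 x - K * (eps ^ 2 * (s * s)) * (exp (- s * x) + exp (- s * (1 - x)))) by ring.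
      rewrite Eq, Hs2.
      assert (EA : m * A = eps ^ 2 * P) by (unfold A; field; lra).
      assert (sg * eps ^ 2 * V2 x <= eps ^ 2 * P).
      { destruct Hsg; subst sg; nra. }
      nra. }
  intros x Hx.
  pose proof (Gen 1 (or_introl eq_refl) x Hx). pose proof (Gen (-1) (or_intror eq_refl) x Hx).
  fold A K s. unfold Rabs. destruct Rcase_abs; lra.
Qed.

Lemma exp_pos' t : 0 < exp t. Proof. apply exp_pos. Qed.

Lemma sinh_ge t : 0 < t -> t <= sinh t.
Proof.
  intros Ht.
  destruct (MVT_cor2 sinh cosh 0 t Ht) as [c [E _]].
  { intros c _. apply derivable_pt_lim_sinh. }
  rewrite sinh_0, Rminus_0_r, Rminus_0_r in E.
  assert (1 <= cosh c).
  { unfold cosh. rewrite exp_Ropp. pose proof (exp_pos c).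
    assert (exp c + / exp c - 2 = (exp c - 1)^2 / exp c) by (field; lra).
    assert (0 <= (exp c - 1)^2 / exp c) by (apply Rmult_le_pos; [apply pow2_ge_0 | left; apply Rinv_0_lt_compat; lra]).
    lra. }
  nra.
Qed.

Lemma sinh_pos t : 0 < t -> 0 < sinh t.
Proof. intros. pose proof (sinh_ge t H). lra. Qed.

Lemma Dd_form b t : 0 < t -> b / tanh t - b / sinh t = b * ((exp t - 1) / (exp t + 1)).
Proof.
  intros Ht. pose proof (exp_pos t). assert (1 < exp t) by (pose proof (exp_ineq1 t ltac:(lra)); lra).
  unfold tanh, sinh, cosh. rewrite exp_Ropp. field. repeat split; nra.
Qed.

Lemma ratio_mono X0 X : 1 < X0 -> X0 <= X -> (X0 - 1) / (X0 + 1) <= (X - 1) / (X + 1).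
Proof.
  intros H1 H2. apply Rmult_le_reg_r with ((X0 + 1) * (X + 1)). nra.
  replace ((X0 - 1) / (X0 + 1) * ((X0 + 1) * (X + 1))) with ((X0 - 1) * (X + 1)) by (field; lra).
  replace ((X - 1) / (X + 1) * ((X0 + 1) * (X + 1))) with ((X - 1) * (X0 + 1)) by (field; lra). nra.
Qed.

Lemma ratio_lt1 X : 1 < X -> 0 < (X - 1) / (X + 1) < 1.
Proof.
  intros H. split. apply Rdiv_lt_0_compat; lra.
  apply Rmult_lt_reg_r with (X + 1). lra.
  replace ((X - 1) / (X + 1) * (X + 1)) with (X - 1) by (field; lra). lra.
Qed.

Lemma Gbound g b h H T0 Y0 Y1 Y2 F0 F1 F2 : 0 < g -> 0 < b -> 0 < h -> 0 < T0 -> T0 <= b * H ->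
  Rabs (g / ((b / tanh (b * h) - b / sinh (b * h)) + (b / tanh (b * H) - b / sinh (b * H))) *
    ((3 * (b / sinh (b * h)) + b / tanh (b * h) + (b / tanh (b * H) - b / sinh (b * H))) * (Y0 - Y1)
     - (3 * (b / sinh (b * H)) + b / tanh (b * H) + (b / tanh (b * h) - b / sinh (b * h))) * (Y1 - Y2)
     - (F0 + 2 * F1 + F2) / g * ((b / tanh (b * h) - b / sinh (b * h)) + (b / tanh (b * H) - b / sinh (b * H)))))
  <= g * (4 / h + 2 * b) / (b * ((exp T0 - 1) / (exp T0 + 1))) * Rabs (Y0 - Y1)
     + g * (4 / sinh T0 + 2) / ((exp T0 - 1) / (exp T0 + 1)) * Rabs (Y1 - Y2)
     + (Rabs F0 + 2 * Rabs F1 + Rabs F2).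
Proof.
  intros Hg Hb Hh HT0 HT.
  assert (Hbh : 0 < b * h) by nra.
  assert (HbH : 0 < b * H) by lra.
  set (c0 := (exp T0 - 1) / (exp T0 + 1)).
  assert (HX0 : 1 < exp T0) by (pose proof (exp_ineq1 T0 ltac:(lra)); lra).
  assert (Hc0 := ratio_lt1 _ HX0). fold c0 in Hc0.
  assert (HX1 : 1 < exp (b * h)) by (pose proof (exp_ineq1 (b*h) ltac:(lra)); lra).
  assert (HX2 : exp T0 <= exp (b * H)).
  { destruct (Rle_lt_or_eq_dec _ _ HT) as [l|e]. left; apply exp_increasing; auto. rewrite e; lra. }
  rewrite !Dd_form by auto.
  set (D1 := (exp (b * h) - 1) / (exp (b * h) + 1)).
  set (D2 := (exp (b * H) - 1) / (exp (b * H) + 1)).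
  assert (HD1 := ratio_lt1 _ HX1). fold D1 in HD1.
  assert (HD2 : c0 <= D2 < 1).
  { split. apply ratio_mono; auto. apply ratio_lt1. lra. }
  set (a1 := b / sinh (b * h)). set (a2 := b / sinh (b * H)).
  assert (Ha1 : 0 < a1 <= 1 / h).
  { unfold a1. pose proof (sinh_ge _ Hbh). split. apply Rdiv_lt_0_compat; lra.
    apply Rmult_le_reg_r with (sinh (b * h)). lra.
    replace (b / sinh (b * h) * sinh (b * h)) with b by (field; lra).
    replace (1 / h * sinh (b * h)) with (sinh (b * h) / h) by (field; lra).
    apply Rmult_le_reg_r with h. lra. replace (sinh (b * h) / h * h) with (sinh (b * h)) by (field; lra). lra. }
  assert (Ha2 : 0 < a2 <= b / sinh T0).
  { unfold a2. pose proof (sinh_pos _ HT0).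
    assert (sinh T0 <= sinh (b * H)).
    { destruct (Rle_lt_or_eq_dec _ _ HT) as [l|e]. left; apply sinh_lt; auto. rewrite e; lra. }
    split. apply Rdiv_lt_0_compat; lra.
    unfold Rdiv. apply Rmult_le_compat_l. lra. apply Rinv_le_contravar; lra. }
  assert (EtanA : b / tanh (b * h) = a1 + b * D1).
  { unfold a1, D1. rewrite <- Dd_form by auto. ring. }
  assert (EtanB : b / tanh (b * H) = a2 + b * D2).
  { unfold a2, D2. rewrite <- Dd_form by auto. ring. }
  rewrite EtanA, EtanB.
  set (S := b * D1 + b * D2).
  assert (HS : b * c0 <= S).
  { unfold S. assert (0 < b * D1) by nra. nra. }
  assert (HS0 : 0 < S) by nra.
  set (A := 3 * a1 + (a1 + b * D1) + b * D2).
  set (B := 3 * a2 + (a2 + b * D2) + b * D1).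
  assert (HA : 0 <= A <= 4 / h + 2 * b).
  { unfold A. split. nra. assert (4 * a1 <= 4 / h) by (unfold Rdiv; lra). nra. }
  assert (HB : 0 <= B <= b * (4 / sinh T0 + 2)).
  { unfold B. split. nra. assert (4 * a2 <= 4 * (b / sinh T0)) by lra.
    replace (b * (4 / sinh T0 + 2)) with (4 * (b / sinh T0) + 2 * b) by (field; pose proof (sinh_pos _ HT0); lra). nra. }
  fold A B.
  replace (g / S * (A * (Y0 - Y1) - B * (Y1 - Y2) - (F0 + 2 * F1 + F2) / g * S))
    with (g * A / S * (Y0 - Y1) - g * B / S * (Y1 - Y2) - (F0 + 2 * F1 + F2)) by (field; lra).
  assert (T1 : Rabs (g * A / S * (Y0 - Y1)) <= g * (4 / h + 2 * b) / (b * c0) * Rabs (Y0 - Y1)).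
  { rewrite Rabs_mult. apply Rmult_le_compat_r. apply Rabs_pos.
    rewrite Rabs_right. 2: { apply Rle_ge. apply Rmult_le_pos. nra. left; apply Rinv_0_lt_compat; lra. }
    unfold Rdiv. apply Rmult_le_compat. nra. left; apply Rinv_0_lt_compat; lra.
    apply Rmult_le_compat_l; lra. apply Rinv_le_contravar; nra. }
  assert (T2 : Rabs (g * B / S * (Y1 - Y2)) <= g * (4 / sinh T0 + 2) / c0 * Rabs (Y1 - Y2)).
  { rewrite Rabs_mult. apply Rmult_le_compat_r. apply Rabs_pos.
    rewrite Rabs_right. 2: { apply Rle_ge. apply Rmult_le_pos. nra. left; apply Rinv_0_lt_compat; lra. }
    replace (g * (4 / sinh T0 + 2) / c0) with (g * (b * (4 / sinh T0 + 2)) / (b * c0)) by (pose proof (sinh_pos _ HT0); field; repeat split; lra).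
    unfold Rdiv. apply Rmult_le_compat. nra. left; apply Rinv_0_lt_compat; lra.
    apply Rmult_le_compat_l; lra. apply Rinv_le_contravar; nra. }
  assert (T3 : Rabs (F0 + 2 * F1 + F2) <= Rabs F0 + 2 * Rabs F1 + Rabs F2).
  { pose proof (Rabs_triang (F0 + 2 * F1) F2) as Q1. pose proof (Rabs_triang F0 (2 * F1)) as Q2.
    rewrite Rabs_mult, (Rabs_right 2) in Q2 by lra. lra. }
  set (P1 := g * A / S * (Y0 - Y1)) in *. set (P2 := g * B / S * (Y1 - Y2)) in *.
  set (P3 := F0 + 2 * F1 + F2) in *.
  pose proof (Rabs_triang (P1 + - P2) (- P3)) as Q1. pose proof (Rabs_triang P1 (- P2)) as Q2.
  rewrite Rabs_Ropp in Q1, Q2. replace (P1 - P2 - P3) with (P1 + - P2 + - P3) by ring. lra.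
Qed.

Lemma u0_lip f fx fy m g L a b : Hf f fx fy m g ->
  (forall x, 0 <= x <= 1 -> Rabs (U1 f fx fy x) <= L) -> 0 <= a <= 1 -> 0 <= b <= 1 ->
  Rabs (u0 f a - u0 f b) <= L * Rabs (a - b).
Proof.
  intros H HL Ha Hb.
  destruct (MVT_gen (u0 f) b a (U1 f fx fy)) as [c [Hc E]].
  - intros x Hx. apply (U1_deriv f fx fy m g x H).
    unfold Rmin, Rmax in Hx; destruct Rle_dec in Hx; lra.
  - intros x _. apply (u0_cont f fx fy m g x H).
  - rewrite E, Rabs_mult. apply Rmult_le_compat_r. apply Rabs_pos. apply HL.
    unfold Rmin, Rmax in Hc; destruct Rle_dec in Hc; lra.
Qed.

Lemma final_arith g sg b h H c0 s0 n eps L R R' C0 sm D0 D1 F :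
  0 < g -> 0 < b -> 0 < h -> 0 < c0 -> 0 < s0 -> 4 <= n -> 0 < eps -> 0 <= L -> 0 <= R -> 0 <= R' ->
  0 < C0 -> 0 <= sm -> 0 <= sg ->
  D0 <= L * h + 2 * R -> D1 <= L * H + 2 * R -> F <= 4 * g * R ->
  g / b = sg * eps -> eps / h <= n * sm / 8 -> h <= 1 / n -> H <= 2 / n -> eps <= C0 / n -> R <= R' / (n * n) ->
  0 <= D0 -> 0 <= D1 ->
  g * (4 / h + 2 * b) / (b * c0) * D0 + g * (4 / s0 + 2) / c0 * D1 + F <=
  ((4 * sg * (L * C0 + sm * R' / 4) + 2 * g * (L + 2 * R')) / c0
   + g * (4 / s0 + 2) * (2 * L + 2 * R') / c0 + 4 * g * R') / n.
Proof.
  intros Hg Hb Hh Hc0 Hs0 Hn He HL HR HR' HC0 Hsm Hsg HD0 HD1 HF Egb Eh Hh1 HH1 He1 HR1 D0p D1p.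
  assert (Hn0 : 0 < n) by lra.
  assert (HR2 : R <= R' / n).
  { eapply Rle_trans. apply HR1. unfold Rdiv. apply Rmult_le_compat_l. lra.
    apply Rinv_le_contravar; nra. }
  assert (E1 : g * (4 / h + 2 * b) / (b * c0) = (4 * sg * (eps / h) + 2 * g) / c0).
  { replace (g * (4 / h + 2 * b) / (b * c0)) with ((4 * (g / b) / h + 2 * g) / c0) by (field; lra).
    rewrite Egb. field; lra. }
  rewrite E1.
  assert (T1a : 4 * sg * (eps / h) * D0 <= 4 * sg * (L * C0 + sm * R' / 4) / n).
  { apply Rle_trans with (4 * sg * (eps / h) * (L * h + 2 * R)).
    apply Rmult_le_compat_l; auto. apply Rmult_le_pos. lra. apply Rdiv_le_0_compat; lra.
    replace (4 * sg * (eps / h) * (L * h + 2 * R)) with (4 * sg * (eps * L + 2 * (eps / h) * R)) by (field; lra).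
    replace (4 * sg * (L * C0 + sm * R' / 4) / n) with (4 * sg * (L * C0 / n + sm * R' / (4 * n))) by (field; lra).
    apply Rmult_le_compat_l. lra.
    apply Rplus_le_compat.
    - rewrite Rmult_comm. unfold Rdiv. rewrite Rmult_assoc. apply Rmult_le_compat_l; auto.
    - apply Rle_trans with (2 * (n * sm / 8) * (R' / (n * n))).
      apply Rmult_le_compat. apply Rmult_le_pos. lra. apply Rdiv_le_0_compat; lra. auto. lra. auto.
      right. field. lra. }
  assert (T1b : 2 * g * D0 <= 2 * g * (L + 2 * R') / n).
  { apply Rle_trans with (2 * g * (L * h + 2 * R)). apply Rmult_le_compat_l; lra.
    replace (2 * g * (L + 2 * R') / n) with (2 * g * (L * (1 / n) + 2 * (R' / n))) by (field; lra).
    apply Rmult_le_compat_l. lra. apply Rplus_le_compat. apply Rmult_le_compat_l; auto. lra. }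
  assert (T2 : D1 <= (2 * L + 2 * R') / n).
  { eapply Rle_trans. apply HD1.
    replace ((2 * L + 2 * R') / n) with (L * (2 / n) + 2 * (R' / n)) by (field; lra).
    apply Rplus_le_compat. apply Rmult_le_compat_l; auto. lra. }
  assert (T3 : F <= 4 * g * R' / n).
  { eapply Rle_trans. apply HF. apply Rle_trans with (4 * g * (R' / n)).
    apply Rmult_le_compat_l; lra. right; field; lra. }
  assert (K2 : 0 <= g * (4 / s0 + 2) / c0).
  { apply Rdiv_le_0_compat; [|lra]. apply Rmult_le_pos. lra. assert (0 < 4 / s0) by (apply Rdiv_lt_0_compat; lra). lra. }
  assert (T2' : g * (4 / s0 + 2) / c0 * D1 <= g * (4 / s0 + 2) / c0 * ((2 * L + 2 * R') / n)).
  { apply Rmult_le_compat_l; auto. }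
  replace ((4 * sg * (eps / h) + 2 * g) / c0 * D0) with ((4 * sg * (eps / h) * D0 + 2 * g * D0) / c0) by (field; lra).
  apply Rle_trans with ((4 * sg * (L * C0 + sm * R' / 4) / n + 2 * g * (L + 2 * R') / n) / c0
       + g * (4 / s0 + 2) / c0 * ((2 * L + 2 * R') / n) + 4 * g * R' / n).
  - apply Rplus_le_compat. apply Rplus_le_compat; auto.
    unfold Rdiv at 1 3. apply Rmult_le_compat_r. left; apply Rinv_0_lt_compat; lra. lra. auto.
  - right. field. lra.
Qed.

Lemma mesh_vals eps m N q : N = (4 * q)%nat -> (1 <= q)%nat ->
  mesh eps m N (q - 1) = lam eps m N - 4 * lam eps m N / INR N /\
  mesh eps m N q = lam eps m N /\
  mesh eps m N (S q) = lam eps m N + 2 * (1 - 2 * lam eps m N) / INR N.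
Proof.
  intros EN Hq.
  assert (E1 : (N / 4 = q)%nat) by (subst; rewrite Nat.mul_comm; apply Nat.div_mul; lia).
  assert (E2 : (3 * N / 4 = 3 * q)%nat).
  { subst. replace (3 * (4 * q))%nat with ((3 * q) * 4)%nat by lia. apply Nat.div_mul; lia. }
  assert (HN : INR N = 4 * INR q) by (subst; rewrite mult_INR; simpl; ring).
  assert (Hq0 : 0 < INR q) by (apply lt_0_INR; lia).
  unfold mesh. rewrite E1, E2.
  replace (q - 1 <=? q)%nat with true by (symmetry; apply Nat.leb_le; lia).
  replace (q <=? q)%nat with true by (symmetry; apply Nat.leb_le; lia).
  replace (S q <=? q)%nat with false by (symmetry; apply Nat.leb_gt; lia).
  replace (S q <=? 3 * q)%nat with true by (symmetry; apply Nat.leb_le; lia).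
  replace (S q - q)%nat with 1%nat by lia.
  rewrite minus_INR by lia. rewrite HN. simpl. split; [|split]; field; lra.
Qed.

Lemma ln_ge1 n : 4 <= n -> 1 <= ln n.
Proof.
  intros Hn. pose proof exp_le_3. rewrite <- (ln_exp 1). left. apply ln_increasing. apply exp_pos. lra.
Qed.

Lemma ln_le_n n : 0 < n -> ln n <= n.
Proof. intros. pose proof (exp_ineq1_le (ln n)). rewrite exp_ln in H0; lra. Qed.

Lemma exp_m2ln n : 0 < n -> exp (- (2 * ln n)) = 1 / (n * n).
Proof.
  intros Hn. rewrite exp_Ropp. replace (2 * ln n) with (ln n + ln n) by ring.
  rewrite exp_plus, exp_ln by auto. field. lra.
Qed.

Lemma exp_le a b : a <= b -> exp a <= exp b.
Proof. intros H. destruct (Rle_lt_or_eq_dec _ _ H). left; apply exp_increasing; auto. subst; lra. Qed.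

Lemma psi_pt A K s n l X : 0 <= K -> 4 <= n -> s * l = 2 * ln n -> 0 < s ->
  l - 4 * l / n <= X -> l <= 1 - X ->
  psi A K s X <= A + K * (exp 8 + 1) / (n * n).
Proof.
  intros HK Hn Hsl Hs H1 H2. unfold psi.
  assert (Hn0 : 0 < n) by lra.
  assert (E1 : exp (- s * X) <= exp 8 / (n * n)).
  { apply Rle_trans with (exp (8 + - (2 * ln n))).
    apply exp_le. 
    assert (s * (l - 4 * l / n) <= s * X) by (apply Rmult_le_compat_l; lra).
    replace (s * (l - 4 * l / n)) with ((s * l) * (1 - 4 / n)) in H by (field; lra).
    rewrite Hsl in H. replace (2 * ln n * (1 - 4 / n)) with (2 * ln n - 8 * (ln n / n)) in H by (field; lra).
    assert (ln n / n <= 1).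
    { apply Rmult_le_reg_r with n; auto. replace (ln n / n * n) with (ln n) by (field; lra). pose proof (ln_le_n n Hn0). lra. }
    lra.
    rewrite exp_plus, exp_m2ln by auto. right; field; lra. }
  assert (E2 : exp (- s * (1 - X)) <= 1 / (n * n)).
  { rewrite <- exp_m2ln by auto. apply exp_le. rewrite <- Hsl.
    assert (s * l <= s * (1 - X)) by (apply Rmult_le_compat_l; lra). lra. }
  assert (K * (exp (- s * X) + exp (- s * (1 - X))) <= K * (exp 8 / (n * n) + 1 / (n * n))).
  { apply Rmult_le_compat_l; lra. }
  replace (K * (exp 8 + 1) / (n * n)) with (K * (exp 8 / (n * n) + 1 / (n * n))) by (field; lra). lra.
Qed.

Theorem lemma4 :
  forall (k : nat) (f : R -> R -> R) (m gamma C0 : R),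
    (2 <= k)%nat ->
    Ck k f ->
    0 < m ->
    (forall x v, 0 <= x <= 1 -> m <= f_y f x v) ->
    (forall x v, 0 <= x <= 1 -> f_y f x v <= gamma) ->
    0 < C0 ->
    exists C : R, 0 < C /\
      forall (eps : R) (N : nat) (y : R -> R),
        0 < eps ->
        (0 < N)%nat -> (N mod 4 = 0)%nat ->
        lam eps m N <= 1 / 4 ->
        eps <= C0 / INR N ->
        (forall x, 0 <= x <= 1 ->
           filterlim y (within (fun t => 0 <= t <= 1) (locally x)) (locally (y x))) ->
        (exists y1 y2 : R -> R, forall x, 0 < x < 1 ->
            is_derive y x (y1 x) /\ is_derive y1 x (y2 x) /\
            eps ^ 2 * y2 x = f x (y x)) ->
        y 0 = 0 -> y 1 = 0 ->
        Rabs (Gop f gamma eps (mesh eps m N) N (fun j => y (mesh eps m N j)) (N / 4)%nat)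
          <= C / INR N.
Proof.
  intros k f m gamma C0 Hk HCk Hm Hfy1 Hfy2 HC0.
  apply Ck_ge2 in HCk; auto.
  destruct (Ck2_struct f HCk) as (fx & fy & fxx & fxy & fyx & fyy & Cf & Cfx & Cfy & Cfxx & Cfxy & Cfyx & Cfyy & Pf & Pfx & Pfy).
  assert (Efy : forall x v, 0 <= x <= 1 -> f_y f x v = fy x v).
  { intros x v Hx. unfold f_y. apply is_derive_unique. apply (Pf x v Hx). }
  assert (HF : Hf f fx fy m gamma).
  { refine (conj Pf (conj Cf (conj Cfy (conj Hm _)))). intros x0 v0 Hx0. rewrite <- Efy by auto. split; auto. }
  assert (Hg : 0 < gamma) by (pose proof (Hfy1 0 0 ltac:(lra)); pose proof (Hfy2 0 0 ltac:(lra)); lra).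
  destruct (U_bounds f fx fy fxx fxy fyx fyy m gamma HF Cfx Cfxx Cfxy Cfyx Cfyy) as [L [P [HL [HP HUP]]]].
  set (K0 := Rabs (u0 f 0) + Rabs (u0 f 1)).
  assert (HK0 : 0 <= K0) by (unfold K0; pose proof (Rabs_pos (u0 f 0)); pose proof (Rabs_pos (u0 f 1)); lra).
  set (sg := sqrt gamma). set (sm := sqrt m).
  assert (Hsg : 0 < sg) by (apply sqrt_lt_R0; lra).
  assert (Hsm : 0 < sm) by (apply sqrt_lt_R0; lra).
  set (T0 := sg / C0).
  assert (HT0 : 0 < T0) by (apply Rdiv_lt_0_compat; lra).
  set (c0 := (exp T0 - 1) / (exp T0 + 1)).
  assert (HX0 : 1 < exp T0) by (pose proof (exp_ineq1 T0 ltac:(lra)); lra).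
  assert (Hc0 : 0 < c0) by (apply (ratio_lt1 _ HX0)).
  set (s0 := sinh T0).
  assert (Hs0 : 0 < s0) by (apply sinh_pos; auto).
  set (R' := C0 ^ 2 * P / m + K0 * (exp 8 + 1)).
  assert (HR' : 0 <= R').
  { unfold R'. apply Rplus_le_le_0_compat. apply Rdiv_le_0_compat; [|lra]. apply Rmult_le_pos; auto. nra.
    apply Rmult_le_pos; auto. pose proof (exp_pos 8); lra. }
  set (C := ((4 * sg * (L * C0 + sm * R' / 4) + 2 * gamma * (L + 2 * R')) / c0
   + gamma * (4 / s0 + 2) * (2 * L + 2 * R') / c0 + 4 * gamma * R')).
  assert (HC : 0 <= C).
  { unfold C. assert (0 < 4 / s0) by (apply Rdiv_lt_0_compat; lra).
    assert (0 <= L * C0) by nra. assert (0 <= sm * R' / 4) by (apply Rdiv_le_0_compat; nra).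
    assert (0 <= 4 * sg * (L * C0 + sm * R' / 4)) by nra.
    assert (0 <= 2 * gamma * (L + 2 * R')) by nra.
    assert (0 <= gamma * (4 / s0 + 2) * (2 * L + 2 * R')) by (apply Rmult_le_pos; nra).
    assert (0 <= 4 * gamma * R') by nra.
    assert (0 <= (4 * sg * (L * C0 + sm * R' / 4) + 2 * gamma * (L + 2 * R')) / c0) by (apply Rdiv_le_0_compat; lra).
    assert (0 <= gamma * (4 / s0 + 2) * (2 * L + 2 * R') / c0) by (apply Rdiv_le_0_compat; lra).
    lra. }
  exists (C + 1). split. lra.
  intros eps N y Heps HN HN4 Hlam HepsN Hyc [y1 [y2 Hy]] Hy0 Hy1.
  set (q := (N / 4)%nat).
  assert (EN : N = (4 * q)%nat) by (pose proof (Nat.div_mod_eq N 4); unfold q; lia).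
  assert (Hq : (1 <= q)%nat) by lia.
  set (n := INR N). fold n in HepsN.
  assert (Hnq : n = 4 * INR q) by (unfold n; rewrite EN, mult_INR; simpl; ring).
  assert (Hn : 4 <= n) by (rewrite Hnq; assert (1 <= INR q) by (apply (le_INR 1); lia); lra).
  assert (Hn0 : 0 < n) by lra.
  assert (Hbar := barrier f fx fy m gamma (U1 f fx fy) (U2 f fx fy fxx fxy fyx fyy) P eps y y1 y2 HF
     (fun x Hx => conj (U1_deriv f fx fy m gamma x HF Hx) (U2_deriv f fx fy fxx fxy fyx fyy m gamma x HF Pfx Cfxy Pfy Cfyy Hx))
     HP (fun x Hx => proj2 (HUP x ltac:(lra))) Heps Hyc Hy Hy0 Hy1).
  fold K0 in Hbar.
  destruct (mesh_vals eps m N q EN Hq) as [E0 [E1 E2]]. fold n in E0, E2.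
  set (l := lam eps m N) in *.
  assert (Hlv : l = 2 * eps * ln n / sm) by reflexivity.
  assert (Hln : 1 <= ln n) by (apply ln_ge1; auto).
  assert (Hl0 : 0 < l) by (rewrite Hlv; apply Rdiv_lt_0_compat; nra).
  unfold Gop. cbv beta zeta.
  replace (q =? 0)%nat with false by (symmetry; apply Nat.eqb_neq; lia).
  replace (q =? N)%nat with false by (symmetry; apply Nat.eqb_neq; lia).
  replace (S q - 1)%nat with q by lia.
  fold sg.
  set (X0 := mesh eps m N (q - 1)) in *. set (X1 := mesh eps m N q) in *. set (X2 := mesh eps m N (S q)) in *.
  set (h := X1 - X0). set (H := X2 - X1).
  assert (Eh : h = 4 * l / n) by (unfold h; rewrite E0, E1; ring).
  assert (EH : H = 2 * (1 - 2 * l) / n) by (unfold H; rewrite E1, E2; ring).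
  assert (Hh0 : 0 < h) by (rewrite Eh; apply Rdiv_lt_0_compat; lra).
  assert (Hb : 0 < sg / eps) by (apply Rdiv_lt_0_compat; lra).
  assert (HbH : T0 <= sg / eps * H).
  { rewrite EH. unfold T0.
    assert (1 / n <= 2 * (1 - 2 * l) / n) by (unfold Rdiv; apply Rmult_le_compat_r; [left; apply Rinv_0_lt_compat| ]; lra).
    assert (eps * n <= C0).
    { apply Rmult_le_reg_r with (/ n). apply Rinv_0_lt_compat; lra.
      rewrite Rmult_assoc, Rinv_r, Rmult_1_r by lra. exact HepsN. }
    apply Rle_trans with (sg / eps * (1 / n)).
    - replace (sg / eps * (1 / n)) with (sg / (eps * n)) by (field; lra).
      unfold Rdiv. apply Rmult_le_compat_l. lra. apply Rinv_le_contravar; nra.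
    - apply Rmult_le_compat_l; lra. }
  eapply Rle_trans. apply (Gbound gamma (sg / eps) h H T0); auto.
  set (R := eps ^ 2 * P / m + K0 * (exp 8 + 1) / (n * n)).
  assert (HR : 0 <= R).
  { unfold R. apply Rplus_le_le_0_compat. apply Rdiv_le_0_compat; [|lra]. apply Rmult_le_pos; auto. nra.
    apply Rdiv_le_0_compat; [|nra]. apply Rmult_le_pos; auto. pose proof (exp_pos 8); lra. }
  assert (Hsl : sm / eps * l = 2 * ln n) by (rewrite Hlv; field; lra).
  assert (Hsm' : 0 < sm / eps) by (apply Rdiv_lt_0_compat; lra).
  assert (HX0i : 0 <= X0 <= 1) by (rewrite E0; split; [ | ]; 
     [ replace (l - 4 * l / n) with (l * (1 - 4 / n)) by (field; lra); apply Rmult_le_pos; [lra| ];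
       assert (4 / n <= 1) by (apply Rmult_le_reg_r with n; [lra|]; replace (4 / n * n) with 4 by (field; lra); lra); lra
     | assert (0 < 4 * l / n) by (apply Rdiv_lt_0_compat; lra); lra ]).
  assert (HX1i : 0 <= X1 <= 1) by (rewrite E1; lra).
  assert (HHn : H <= 2 / n).
  { rewrite EH. unfold Rdiv. apply Rmult_le_compat_r. left; apply Rinv_0_lt_compat; lra. lra. }
  assert (HH0 : 0 <= H) by (rewrite EH; apply Rdiv_le_0_compat; lra).
  assert (HHn2 : H <= 1 / 2).
  { apply Rle_trans with (2 / n); auto. apply Rmult_le_reg_r with n. lra.
    replace (2 / n * n) with 2 by (field; lra). lra. }
  assert (HX2i : 0 <= X2 <= 1) by (assert (X2 = X1 + H) by (unfold H; ring); lra).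
  assert (Hpsi : forall X, X = X0 \/ X = X1 \/ X = X2 -> 0 <= X <= 1 /\ Rabs (y X - u0 f X) <= R).
  { intros X HX. assert (HXi : 0 <= X <= 1) by (destruct HX as [->|[->| ->]]; auto).
    split; auto. eapply Rle_trans. apply Hbar; auto.
    unfold R. replace (sqrt m) with sm by reflexivity.
    replace (K0 * (exp 8 + 1) / (n * n)) with (K0 * (exp 8 + 1) / (n * n)) by reflexivity.
    apply (psi_pt _ K0 (sm / eps) n l X); auto.
    - destruct HX as [->|[->| ->]]. rewrite E0; lra. rewrite E1; assert (0 < 4 * l / n) by (apply Rdiv_lt_0_compat; lra); lra.
      assert (X2 = X1 + H) by (unfold H; ring). rewrite E1 in *. assert (0 < 4 * l / n) by (apply Rdiv_lt_0_compat; lra); lra.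
    - destruct HX as [->|[->| ->]].
      + rewrite E0. assert (0 < 4 * l / n) by (apply Rdiv_lt_0_compat; lra); lra.
      + rewrite E1; lra.
      + assert (X2 = X1 + H) by (unfold H; ring). rewrite E1 in *.
        assert (H <= 1 - 2 * l).
        { rewrite EH. apply Rmult_le_reg_r with n. lra. replace (2 * (1 - 2 * l) / n * n) with (2 * (1 - 2 * l)) by (field; lra). nra. }
        lra. }
  change ((exp T0 - 1) / (exp T0 + 1)) with c0. change (sinh T0) with s0.
  apply Rle_trans with (C / n).
  2: { unfold Rdiv. apply Rmult_le_compat_r. left; apply Rinv_0_lt_compat; lra. lra. }
  assert (HUL : forall x, 0 <= x <= 1 -> Rabs (U1 f fx fy x) <= L) by (intros; apply HUP; auto).
  assert (Dif : forall Xa Xb, (Xa = X0 \/ Xa = X1 \/ Xa = X2) -> (Xb = X0 \/ Xb = X1 \/ Xb = X2) ->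
     Rabs (y Xa - y Xb) <= L * Rabs (Xa - Xb) + 2 * R).
  { intros Xa Xb Ha Hb'. destruct (Hpsi Xa Ha) as [Hai Ra]. destruct (Hpsi Xb Hb') as [Hbi Rb].
    assert (Lp := u0_lip f fx fy m gamma L Xa Xb HF HUL Hai Hbi).
    replace (y Xa - y Xb) with ((y Xa - u0 f Xa) + (u0 f Xa - u0 f Xb) - (y Xb - u0 f Xb)) by ring.
    pose proof (Rabs_triang ((y Xa - u0 f Xa) + (u0 f Xa - u0 f Xb)) (- (y Xb - u0 f Xb))) as T1.
    pose proof (Rabs_triang (y Xa - u0 f Xa) (u0 f Xa - u0 f Xb)) as T2.
    rewrite Rabs_Ropp in T1. unfold Rminus at 1. lra. }
  assert (Ff : forall X, (X = X0 \/ X = X1 \/ X = X2) -> Rabs (f X (y X)) <= gamma * R).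
  { intros X HX. destruct (Hpsi X HX) as [Hi Rx].
    destruct (slope_abs f fx fy m gamma X (u0 f X) (y X) HF Hi) as [_ S2].
    assert (Z := u0_spec f fx fy m gamma X HF). rewrite clamp_id in Z by auto.
    rewrite Z, Rminus_0_r in S2. eapply Rle_trans. apply S2. apply Rmult_le_compat_l; lra. }
  apply (final_arith gamma sg (sg / eps) h H c0 s0 n eps L R R' C0 sm); auto; try lra.
  - pose proof (Dif X0 X1 (or_introl eq_refl) (or_intror (or_introl eq_refl))).
    replace (Rabs (X0 - X1)) with h in H0 by (unfold h; rewrite <- Rabs_Ropp; rewrite Rabs_right; [ring | lra]). exact H0.
  - pose proof (Dif X1 X2 (or_intror (or_introl eq_refl)) (or_intror (or_intror eq_refl))).
    replace (Rabs (X1 - X2)) with H in H0 by (unfold H; rewrite <- Rabs_Ropp; rewrite Rabs_right; [ring | lra]). exact H0.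
  - pose proof (Ff X0 (or_introl eq_refl)). pose proof (Ff X1 (or_intror (or_introl eq_refl))).
    pose proof (Ff X2 (or_intror (or_intror eq_refl))). lra.
  - assert (sg * sg = gamma) by (apply sqrt_sqrt; lra). rewrite <- H0. field. lra.
  - rewrite Eh, Hlv. replace (eps / (4 * (2 * eps * ln n / sm) / n)) with (n * sm / 8 / ln n) by (field; repeat split; lra).
    unfold Rdiv at 1. rewrite <- (Rmult_1_r (n * sm / 8)) at 2. apply Rmult_le_compat_l.
    apply Rdiv_le_0_compat; nra. rewrite <- Rinv_1. apply Rinv_le_contravar; lra.
  - rewrite Eh. unfold Rdiv. apply Rmult_le_compat_r. left; apply Rinv_0_lt_compat; lra. lra.
  - unfold R, R'. assert (eps ^ 2 <= C0 ^ 2 / (n * n)).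
    { replace (C0 ^ 2 / (n * n)) with ((C0 / n) ^ 2) by (field; lra). apply pow_incr. lra. }
    assert (eps ^ 2 * P / m <= C0 ^ 2 / (n * n) * P / m).
    { assert (0 <= P / m) by (apply Rdiv_le_0_compat; lra). assert (Z : 0 <= (C0^2/(n*n) - eps^2) * (P/m)) by (apply Rmult_le_pos; lra). replace ((C0 ^ 2 / (n * n) - eps ^ 2) * (P / m)) with (C0^2/(n*n)*P/m - eps^2*P/m) in Z by (field; lra). lra. }
    replace ((C0 ^ 2 * P / m + K0 * (exp 8 + 1)) / (n * n)) with (C0 ^ 2 / (n * n) * P / m + K0 * (exp 8 + 1) / (n * n)) by (field; lra).
    lra.
  - apply Rabs_pos.
  - apply Rabs_pos.
Qed.
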